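(* Let $X$ be a compact topological space, let $D\subseteq X$, let $\overline{D}$ be the closure of $D$ in $X$, and put $\partial D:=\overline{D}\setminus D$. Let $\overline{\mathbb{C}}=\mathbb{C}\cup\{\infty\}$ be the Riemann sphere and let $f\colon\overline{D}\to\overline{\mathbb{C}}$ be a continuous map such that $f(D)$ is open in $\overline{\mathbb{C}}$. Let $M:=\sup_{z\in\partial D}|f(z)|\in[0,\infty]$ (with $|\infty|=\infty$) and $\overline{B}_M:=\{w\in\overline{\mathbb{C}}\colon |w|\le M\}$. Then either $f(D)\supseteq\overline{\mathbb{C}}\setminus\overline{B}_M$ (i.e. $f$ takes on $D$ all values in $\overline{\mathbb{C}}$ of modulus $>M$), or $f(\overline{D})\subseteq\overline{B}_M$.
   Context: Note that $\partial D$ is defined as $\overline{D}\setminus D$; the convention $|\infty|=\infty$ is used. *)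

(* Defs.v *)
From HB Require Import structures.
From mathcomp Require Import all_boot all_order all_algebra.
From mathcomp Require Import all_classical all_reals all_analysis.
From mathcomp Require Import complex.
Import Order.TTheory GRing.Theory Num.Theory.
Import numFieldNormedType.Exports.
Local Open Scope classical_set_scope.
Local Open Scope ring_scope.

(* The Riemann sphere: the one-point compactification of C = R[i]
   (complex numbers equipped with their norm topology).
   [Some z] is the complex number z, [None] is the point at infinity. *)
Definition riemann_sphere (R : realType) : topologicalType :=
  one_point_compactification (R[i] : numFieldType).

Definition sph_abs (R : realType) (w : riemann_sphere R) : \bar R :=
  match w with
  | Some z => (ComplexField.Normc.normc z)%:E
  | None => +oo%E
  end.
Arguments sph_abs {R}.

Definition sph_cball (R : realType) (M : \bar R) : set (riemann_sphere R) :=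
  [set w : riemann_sphere R | (@sph_abs R w <= M)%E].
Arguments sph_cball {R}.

(* Main.v *)
Require Import Defs.
From HB Require Import structures.
From mathcomp Require Import all_boot all_order all_algebra.
From mathcomp Require Import all_classical all_reals all_analysis.
From mathcomp Require Import complex.
Import Order.TTheory GRing.Theory Num.Theory.
Import numFieldNormedType.Exports.
Local Open Scope classical_set_scope.
Local Open Scope ring_scope.
Section S. Variable R : realType.
Local Notation nc := (@ComplexField.Normc.normc R).
Local Notation Re := (@complex.Re R).
Local Notation Im := (@complex.Im R).
Local Notation C := (R[i] : numFieldType).
Lemma normcC (z : R[i]) : `|z| = ((nc z)%:C)%C.
Proof. by case: z. Qed.
Lemma normc_real (t : R) : nc ((t%:C)%C) = `|t|.
Proof. by rewrite /= expr0n /= addr0 sqrtr_sqr. Qed.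
Lemma normc_ge0 (z : R[i]) : 0 <= nc z.
Proof. by case: z => a b; exact: sqrtr_ge0. Qed.
Lemma Re_le_normc (z : R[i]) : `|Re z| <= nc z.
Proof. case: z => a b /=; rewrite -sqrtr_sqr ler_sqrt ?addr_ge0 ?sqr_ge0 //.
by rewrite lerDl sqr_ge0. Qed.
Lemma Im_le_normc (z : R[i]) : `|Im z| <= nc z.
Proof. case: z => a b /=; rewrite -sqrtr_sqr ler_sqrt ?addr_ge0 ?sqr_ge0 //.
by rewrite lerDr sqr_ge0. Qed.
Lemma posC (e : R[i]) : 0 < e -> e = ((Re e)%:C)%C /\ 0 < Re e.
Proof. case: e => a b; rewrite ltcE /=. move=> /andP[/eqP Hb a0]. subst b. split=> //. Qed.
Lemma rc_cont : continuous (fun t : R => (t%:C)%C : C).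
Proof.
move=> t; apply/cvgrPdist_lt => e /posC [-> e0].
apply/nbhs_ballP; exists (Re e) => // s; rewrite /ball /= => hs.
by rewrite -rmorphB normcC normc_real ltcR.
Qed.
Lemma nc_cont : continuous (nc : C -> R).
Proof.
move=> z; apply/(cvgrPdist_lt (F := @nbhs _ C z)) => e e0.
have hb : @nbhs _ C z (ball z ((e%:C)%C)) by apply: nbhsx_ballx; rewrite ltcR.
apply: filterS hb => w; rewrite /ball /= normcC ltcR => hw.
apply: le_lt_trans hw.
have := @ler_dist_dist _ (Rcomplex R) z w. done.
Qed.
Definition psi (p : R * R) : C := ((p.1)%:C)%C + 'i%C * ((p.2)%:C)%C.
Lemma psi_cont : continuous psi.
Proof.
move=> p; apply: cvgD.
  apply: (continuous_comp (f := fst) (g := fun t : R => (t%:C)%C : C)); last exact: rc_cont.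
  exact: cvg_fst.
apply: cvgMr.
apply: (continuous_comp (f := snd) (g := fun t : R => (t%:C)%C : C)); last exact: rc_cont.
exact: cvg_snd.
Qed.
Lemma psiE (w : R[i]) : psi (Re w, Im w) = w.
Proof. by rewrite /psi /= {3}(complexE w). Qed.
Lemma ReB (x w : R[i]) : Re (x - w) = Re x - Re w.
Proof. by case: x; case: w. Qed.
Lemma ImB (x w : R[i]) : Im (x - w) = Im x - Im w.
Proof. by case: x; case: w. Qed.
Lemma cball_compact (x : C) : compact (closed_ball x 1).
Proof.
have box : compact (closed_ball (Re x) 2 `*` closed_ball (Im x) 2).
  by apply: compact_setX; apply: closed_ballR_compact.
have cb : compact (psi @` (closed_ball (Re x) 2 `*` closed_ball (Im x) 2)).
  by apply: continuous_compact box; exact: continuous_subspaceT psi_cont.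
have cc : closed (closed_ball x (1:C)) by exact: closed_ball_closed.
apply: (subclosed_compact cc cb) => w hw.
have e2 : (2:C) / 2 = 1 by rewrite divff // pnatr_eq0.
have h02 : (0:C) < 2 by rewrite ltr0n.
have hw' : closed_ball x ((2:C)/2) w by rewrite e2.
have h2 : ball x (2:C) w by exact: (@subset_closure_half _ C x 2 h02 w hw').
have h2' : nc (x - w) < 2.
  move: h2; rewrite /ball /= normcC.
  have -> : (2:C) = ((2:R)%:C)%C by rewrite rmorph_nat.
  by rewrite ltcR.
exists (Re w, Im w); last exact: psiE.
split; rewrite /= closed_ballE //= /closed_ball_ /=.
  by rewrite -ReB; apply: ltW; apply: le_lt_trans (Re_le_normc _) h2'.
by rewrite -ImB; apply: ltW; apply: le_lt_trans (Im_le_normc _) h2'.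
Qed.
Lemma lcC : locally_compact [set: C].
Proof.
move=> x _; rewrite withinET; exists (closed_ball x 1).
  apply: filterS (@subset_closed_ball _ C x 1) _.
  exact: nbhsx_ballx.
by split; [exact: cball_compact | exact: closed_ball_closed].
Qed.
Lemma sph_haus : hausdorff_space (riemann_sphere R).
Proof. exact: (one_point_compactification_hausdorff lcC (@norm_hausdorff _ C)). Qed.
End S.


Section S. Variable R : realType.
Local Notation nc := (@ComplexField.Normc.normc R).
Local Notation C := (R[i] : numFieldType).
Lemma compact_ncbound (K : set C) : compact K -> exists B : R, forall z, K z -> nc z <= B.
Proof.
move=> cK.
have cK' : compact (nc @` K) by apply: continuous_compact cK; exact: continuous_subspaceT (nc_cont R).
have [M [_ HM]] := compact_bounded cK'.
exists (`|M| + 1) => z Kz.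
have hlt : M < `|M| + 1 by apply: le_lt_trans (ler_norm M) _; rewrite ltrDl.
have := HM _ hlt (nc z) (ex_intro2 _ _ z Kz erefl).
by rewrite /= (ger0_norm (normc_ge0 R z)).
Qed.
End S.

Lemma connected_between (T : topologicalType) (A B : set T) :
  connected A -> A `<=` B -> B `<=` closure A -> connected B.
Proof.
move=> cA AB BcA U [u Uu] [C1 oC1 UC1] [C2 cC2 UC2].
have AU : A `<=` U.
  suff : A `&` U = A by move=> <- x [].
  apply: cA.
  - have : B u by rewrite UC1 in Uu; case: Uu.
    move=> /BcA /(_ C1).
    have : C1 u by rewrite UC1 in Uu; case: Uu.
    move=> C1u /(_ (open_nbhs_nbhs (conj oC1 C1u))) [v [Av C1v]].
    by exists v; split => //; rewrite UC1; split => //; exact: AB.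
  - exists C1 => //; rewrite UC1 eqEsubset; split => x.
      by move=> [Ax [_ Cx]].
    by move=> [Ax Cx]; split => //; split => //; exact: AB.
  - exists C2 => //; rewrite UC2 eqEsubset; split => x.
      by move=> [Ax [_ Cx]].
    by move=> [Ax Cx]; split => //; split => //; exact: AB.
rewrite eqEsubset; split; first by rewrite UC1 => x [].
move=> x Bx; rewrite UC2; split => //.
have : closure A `<=` C2.
  by move=> y; rewrite (closure_id C2).1 //; apply: closureS => z /AU; rewrite UC2 => -[].
by apply; exact: BcA.
Qed.


Section S. Variable R : realType.
Local Notation nc := (@ComplexField.Normc.normc R).
Local Notation Re := (@complex.Re R).
Local Notation Im := (@complex.Im R).
Local Notation C := (R[i] : numFieldType).
Definition Ray (z : C) : set (riemann_sphere R) :=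
  ((fun t : R => Some (((t%:C)%C : C) * z) : riemann_sphere R) @` [set t : R | 1 <= t]) `|` [set None].
Lemma ray_connected (z : C) : 0 < nc z -> connected (Ray z).
Proof.
move=> z0.
apply: (@connected_between _ ((fun t : R => Some (((t%:C)%C : C) * z) : riemann_sphere R) @` [set t : R | 1 <= t])).
- apply: connected_continuous_connected.
    by apply/connected_intervalP => x y hx hy w /andP[h _]; exact: le_trans hx h.
  apply: continuous_subspaceT => t.
  apply: (continuous_comp (f := fun t : R => ((t%:C)%C : C) * z) (g := (Some : C -> riemann_sphere R))).
    by apply: cvgMl; exact: (rc_cont R).
  exact: one_point_compactification_some_continuous.
- by move=> x hx; left.
- move=> x [hx|->]; first exact: subset_closure.
  move=> N [K [cK clK] KN].
  have [B HB] := compact_ncbound R K cK.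
  pose t := Num.max 1 ((`|B| + 1) / nc z).
  have t1 : 1 <= t by rewrite le_max lexx.
  exists (Some (((t%:C)%C : C) * z)); split; first by exists t.
  apply: KN; left; exists (((t%:C)%C : C) * z) => //.
  move=> /HB; apply/negP; rewrite -ltNge.
  rewrite ComplexField.Normc.normcM (normc_real R) ger0_norm; last exact: le_trans t1.
  apply: (@lt_le_trans _ _ (`|B| + 1)).
    by apply: le_lt_trans (ler_norm B) _; rewrite ltrDl.
  rewrite -ler_pdivrMr //.
  by rewrite le_max lexx orbT.
Qed.
End S.



Theorem mainTheorem7 (R : realType) (X : topologicalType) (D : set X)
    (f : X -> riemann_sphere R) :
  compact [set: X] ->
  {within closure D, continuous f} ->
  open (f @` D) ->
  let M : \bar R :=
    ereal_sup ([set 0%E] `|` [set sph_abs (f z) | z in closure D `\` D]) in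
  ~` sph_cball M `<=` f @` D \/ f @` closure D `<=` sph_cball M.
Proof.
move=> cX cf oD M.
have M0 : (0 <= M)%E by apply: ereal_sup_ubound; left.
have bd : forall z, closure D z -> ~ D z -> (sph_abs (f z) <= M)%E.
  by move=> z cz nz; apply: ereal_sup_ubound; right; exists z.
clearbody M.
case: M M0 bd => [m| |] M0 bd; last by [].
  2: by left => w hw; exfalso; apply: hw; rewrite /sph_cball /= leey.
set U := ~` sph_cball m%:E.
have Uchar : forall w, U w <-> (m%:E < sph_abs w)%E.
  by move=> w; rewrite /U /sph_cball /= ltNge; split => [/negP|/negP].
have m0 : 0 <= m by rewrite -lee_fin.
have cK : compact (f @` closure D).
  apply: continuous_compact cf _.
  exact: subclosed_compact (@closed_closure _ D) cX (@subsetT _ _).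
have clK : closed (f @` closure D) by apply: compact_closed (sph_haus R) cK.
have KU : forall w, U w -> (f @` closure D) w -> (f @` D) w.
  move=> w Uw [x cx fx]; have [Dx|nDx] := pselect (D x); first by exists x.
  by exfalso; apply: Uw; rewrite -fx; exact: bd.
have [ne|emp] := pselect ((U `&` f @` D) !=set0); last first.

  apply: or_intror => w [x cx <-]; apply: contrapT => nU.
  apply: emp; exists (f x); split => //; by apply: KU nU _; exists x.
apply: or_introl.
have UE : U = \bigcup_(z in [set z : (R[i] : numFieldType) | m < ComplexField.Normc.normc z]) Ray R z.
  rewrite eqEsubset; split.
    case=> [z|] /Uchar /= hz.
      exists z; first by move: hz; rewrite lte_fin.
      left; exists 1; first exact: lexx.
      by rewrite rmorph1 mul1r.
    exists (((m + 1)%:C)%C).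
      change (m < ComplexField.Normc.normc ((m + 1)%:C)%C).
      by rewrite (normc_real R) ger0_norm ?ltrDl // addr_ge0.
    by right.
  move=> w [z /= mz] [[t t1 <-]|->]; apply/Uchar => //=.
  rewrite lte_fin ComplexField.Normc.normcM (normc_real R) ger0_norm; last exact: le_trans t1.
  by apply: lt_le_trans mz _; rewrite ler_peMl // (normc_ge0 R).
  exact: ltry.
have cU : connected U.
  rewrite UE; apply: bigcup_connected.
    by exists None => z _; right.
  move=> z mz; apply: ray_connected; exact: le_lt_trans m0 mz.
have BU : U `&` f @` D = U.
  apply: cU => //.
    by exists (f @` D).
  exists (f @` closure D) => //.
  rewrite eqEsubset; split => w [Uw hw]; split => //.
    by case: hw => x Dx <-; exists x => //; exact: subset_closure.
  exact: KU.
by move=> w Uw; rewrite -BU in Uw; case: Uw.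
Qed.
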